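(* Let $S$ be a semigroup with unit element $1$, let $X$ be a nonempty set, and let $S_1,\dots,S_n$ be unital subsemigroups of $S$ acting on $X$ from the right (with $x(st)=(xs)t$ and the unit acting as the identity). Suppose that each $S_j$ is left-amenable and that the actions of the $S_j$ commute, i.e. $(xs)t=(xt)s$ for all $x\in X$, $s\in S_i$, $t\in S_j$, $i\neq j$. For $s\in S$ let $S_s:\mathbb{C}^X\to\mathbb{C}^X$ be the Koopman operator $S_sf(x)=f(xs)$. Then for every bounded function $f:X\to\mathbb{C}$ the following are equivalent: (i) $(S_{s_1}-\mathrm{Id})(S_{s_2}-\mathrm{Id})\cdots(S_{s_n}-\mathrm{Id})f=0$ for all $s_j\in S_j$, $j=1,\dots,n$; (ii) there exist functions $f_1,\dots,f_n:X\to\mathbb{C}$ with $f=f_1+\cdots+f_n$ such that for each $j$ the function $f_j$ is $S_j$-invariant, i.e. $S_{s}f_j=f_j$ for all $s\in S_j$.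
   Context: A semigroup $S_j$ is left-amenable if there is a left-invariant mean on $\ell^\infty(S_j)$, i.e. a positive linear functional $\mu$ on $\ell^\infty(S_j)$ with $\mu(\mathbf 1)=1$ and $\mu(g(s\,\cdot))=\mu(g)$ for all $g\in\ell^\infty(S_j)$, $s\in S_j$. *)

(* Defs.v *)
From Stdlib Require Import Reals.
From Coquelicot Require Import Coquelicot.
Open Scope R_scope.

Definition bounded_R {T : Type} (g : T -> R) : Prop :=
  exists M : R, forall t, Rabs (g t) <= M.

Definition bounded_C {X : Type} (f : X -> C) : Prop :=
  exists M : R, forall x, Cmod (f x) <= M.

(* Left-amenability of a semigroup (T, op): there is a left-invariant mean
   on l^oo(T), i.e. a positive linear functional mu on the bounded real
   functions with mu(1) = 1 and mu(g(s .)) = mu(g).  mu is given as a map on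
   all functions T -> R, but only its values on bounded functions matter. *)
Definition left_amenable {T : Type} (op : T -> T -> T) : Prop :=
  exists mu : (T -> R) -> R,
    (forall (g h : T -> R) (a b : R), bounded_R g -> bounded_R h ->
       mu (fun t => a * g t + b * h t) = a * mu g + b * mu h) /\
    (forall g : T -> R, bounded_R g -> (forall t, 0 <= g t) -> 0 <= mu g) /\
    mu (fun _ => 1) = 1 /\
    (forall (s : T) (g : T -> R), bounded_R g ->
       mu (fun t => g (op s t)) = mu g).

Definition sub_op {S : Type} (mul : S -> S -> S) (P : S -> Prop)
  (hP : forall s t, P s -> P t -> P (mul s t))
  (a b : {s : S | P s}) : {s : S | P s} :=
  exist P (mul (proj1_sig a) (proj1_sig b))
        (hP _ _ (proj2_sig a) (proj2_sig b)).

Definition koopman {X S : Type} (act : X -> S -> X) (s : S) (f : X -> C)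
  : X -> C := fun x => f (act x s).

(* (S_{s_0} - Id)(S_{s_1} - Id) ... (S_{s_(k-1)} - Id) f, indices from 0. *)
Fixpoint diff_prod {X S : Type} (act : X -> S -> X) (s : nat -> S) (k : nat)
  (f : X -> C) : X -> C :=
  match k with
  | O => f
  | Datatypes.S k' =>
      diff_prod act s k' (fun x => Cminus (koopman act (s k') f x) (f x))
  end.

Fixpoint fun_sum {X : Type} (fs : nat -> X -> C) (k : nat) : X -> C :=
  match k with
  | O => fun _ => RtoC 0
  | Datatypes.S k' => fun x => Cplus (fun_sum fs k' x) (fs k' x)
  end.

(* Main.v *)
Require Import Defs.
From Stdlib Require Import Reals Lra Lia FunctionalExtensionality.
From Coquelicot Require Import Coquelicot.
Open Scope R_scope.

Lemma C_ext (a b : C) : fst a = fst b -> snd a = snd b -> a = b.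
Proof. destruct a, b; simpl; intros; subst; reflexivity. Qed.

Lemma diff_prod_ext {X S : Type} (act : X -> S -> X) (s s' : nat -> S) k :
  (forall i, (i < k)%nat -> s i = s' i) ->
  forall g, diff_prod act s k g = diff_prod act s' k g.
Proof.
  induction k; intros H g; simpl; [reflexivity|].
  rewrite (H k) by lia. apply IHk. intros; apply H; lia.
Qed.

Lemma diff_prod_minus {X S : Type} (act : X -> S -> X) (s : nat -> S) k :
  forall f g, diff_prod act s k (fun x => Cminus (f x) (g x)) =
    fun x => Cminus (diff_prod act s k f x) (diff_prod act s k g x).
Proof.
  induction k; intros f g; simpl; [reflexivity|].
  rewrite <- IHk. f_equal. apply functional_extensionality; intro x.
  unfold koopman. apply C_ext; simpl; ring.
Qed.

Lemma diff_prod_plus {X S : Type} (act : X -> S -> X) (s : nat -> S) k :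
  forall f g, diff_prod act s k (fun x => Cplus (f x) (g x)) =
    fun x => Cplus (diff_prod act s k f x) (diff_prod act s k g x).
Proof.
  induction k; intros f g; simpl; [reflexivity|].
  rewrite <- IHk. f_equal. apply functional_extensionality; intro x.
  unfold koopman. apply C_ext; simpl; ring.
Qed.

Lemma diff_prod_zero {X S : Type} (act : X -> S -> X) (s : nat -> S) k :
  diff_prod act s k (fun _ => RtoC 0) = fun _ => RtoC 0.
Proof.
  induction k; simpl; [reflexivity|].
  match goal with |- diff_prod _ _ _ ?F = _ => replace F with (fun _ : X => RtoC 0) end;
  [exact IHk|]. apply functional_extensionality; intro x.
  unfold koopman. apply C_ext; simpl; ring.
Qed.

Lemma diff_prod_comm {X S : Type} (act : X -> S -> X) (s : nat -> S)
  (T : (X -> C) -> (X -> C)) (B : (X -> C) -> Prop) k :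
  (forall f g, B f -> B g -> T (fun x => Cminus (f x) (g x)) = fun x => Cminus (T f x) (T g x)) ->
  (forall i f, (i < k)%nat -> B f -> T (koopman act (s i) f) = koopman act (s i) (T f)) ->
  (forall i f, (i < k)%nat -> B f -> B (koopman act (s i) f)) ->
  (forall f g, B f -> B g -> B (fun x => Cminus (f x) (g x))) ->
  forall f, B f -> T (diff_prod act s k f) = diff_prod act s k (T f).
Proof.
  intros HT HK HBK HBM. induction k; intros f Bf; simpl; [reflexivity|].
  rewrite IHk.
  all: try (intros; apply HK; auto; lia).
  all: try (intros; apply HBK; auto; lia).
  all: try (apply HBM; auto; apply HBK; auto; lia).
  f_equal. rewrite HT. rewrite HK. reflexivity. lia. auto. apply HBK; auto; lia. auto.
Qed.

Lemma fun_sum_ext {X : Type} (fs fs' : nat -> X -> C) k :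
  (forall i, (i < k)%nat -> fs i = fs' i) -> fun_sum fs k = fun_sum fs' k.
Proof.
  induction k; intros H; simpl; [reflexivity|].
  rewrite IHk by (intros; apply H; lia). rewrite (H k) by lia. reflexivity.
Qed.

Lemma Cminus_bdd {X : Type} (f g : X -> C) : bounded_C f -> bounded_C g ->
  bounded_C (fun x => Cminus (f x) (g x)).
Proof.
  intros [M HM] [N HN]. exists (M + N). intro x. unfold Cminus.
  eapply Rle_trans; [apply Cmod_triangle|]. rewrite Cmod_opp.
  specialize (HM x); specialize (HN x). lra.
Qed.

Lemma Cminus_zero (a b : C) : Cminus a b = RtoC 0 -> a = b.
Proof.
  intro H. destruct a as [a1 a2], b as [b1 b2].
  unfold Cminus, Cplus, Copp, RtoC in H; simpl in H. injection H; intros.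
  f_equal; lra.
Qed.

Theorem theorem1p1
  (S : Type) (mul : S -> S -> S) (e : S)
  (mul_assoc : forall a b c, mul a (mul b c) = mul (mul a b) c)
  (mul_e_l : forall a, mul e a = a) (mul_e_r : forall a, mul a e = a)
  (X : Type) (X_ne : inhabited X)
  (n : nat) (hn : (1 <= n)%nat)
  (Sj : nat -> S -> Prop)
  (Sj_unit : forall j, (j < n)%nat -> Sj j e)
  (Sj_mul : forall j s t, Sj j s -> Sj j t -> Sj j (mul s t))
  (Sj_amen : forall j, (j < n)%nat -> left_amenable (sub_op mul (Sj j) (Sj_mul j)))
  (act : X -> S -> X)
  (act_e : forall x, act x e = x)
  (act_mul : forall j, (j < n)%nat -> forall x s t, Sj j s -> Sj j t ->
     act x (mul s t) = act (act x s) t)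
  (act_comm : forall i j, (i < n)%nat -> (j < n)%nat -> i <> j ->
     forall x s t, Sj i s -> Sj j t -> act (act x s) t = act (act x t) s)
  (f : X -> C) (f_bdd : bounded_C f) :
  (forall s : nat -> S, (forall j, (j < n)%nat -> Sj j (s j)) ->
     diff_prod act s n f = (fun _ => RtoC 0))
  <->
  (exists fs : nat -> X -> C,
     f = fun_sum fs n /\
     (forall j, (j < n)%nat -> forall s, Sj j s -> koopman act s (fs j) = fs j)).
Proof.
  split.
  -
    assert (Main : forall k, (k <= n)%nat -> forall f, bounded_C f ->
      (forall s, (forall j, (j < k)%nat -> Sj j (s j)) -> diff_prod act s k f = fun _ => RtoC 0) ->
      exists fs : nat -> X -> C, f = fun_sum fs k /\
        (forall j, (j < k)%nat -> forall s, Sj j s -> koopman act s (fs j) = fs j)).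
    { induction k as [|k IH]; intros Hk f0 Hb0 H0.
      - exists (fun _ _ => RtoC 0). split.
        + simpl. rewrite <- (H0 (fun _ => e)) by (intros; lia). reflexivity.
        + intros; lia.
      - assert (Hkn : (k < n)%nat) by lia.
        destruct (Sj_amen k Hkn) as [mu [Hlin [Hpos [H1 Hinvm]]]].
        set (P := fun (h : X -> C) (x : X) =>
          (mu (fun t : {s | Sj k s} => fst (h (act x (proj1_sig t)))),
           mu (fun t : {s | Sj k s} => snd (h (act x (proj1_sig t)))))).
        assert (bR1 : forall h x, bounded_C h ->
          bounded_R (fun t : {s | Sj k s} => fst (h (act x (proj1_sig t))))).
        { intros h x [M HM]. exists M. intro t. eapply Rle_trans; [|apply HM].
          eapply Rle_trans; [apply Rmax_l|apply Rmax_Cmod]. }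
        assert (bR2 : forall h x, bounded_C h ->
          bounded_R (fun t : {s | Sj k s} => snd (h (act x (proj1_sig t))))).
        { intros h x [M HM]. exists M. intro t. eapply Rle_trans; [|apply HM].
          eapply Rle_trans; [apply Rmax_r|apply Rmax_Cmod]. }
        assert (cst : forall c, mu (fun _ => c) = c).
        { intro c. assert (bc : bounded_R (fun _ : {s | Sj k s} => 1)) by (exists 1; intros; rewrite Rabs_R1; lra).
          pose proof (Hlin _ _ c 0 bc bc) as Hc. rewrite H1 in Hc.
          replace (fun t : {s | Sj k s} => c * 1 + 0 * 1) with (fun _ : {s | Sj k s} => c) in Hc
            by (apply functional_extensionality; intros; ring).
          rewrite Hc; ring. }
        assert (mub : forall g M, (forall t, Rabs (g t) <= M) -> Rabs (mu g) <= M).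
        { intros g M HM. assert (bg : bounded_R g) by (exists M; auto).
          assert (bc : bounded_R (fun _ : {s | Sj k s} => 1)) by (exists 1; intros; rewrite Rabs_R1; lra).
          pose proof (Hlin _ _ M (-1) bc bg) as E1. pose proof (Hlin _ _ M 1 bc bg) as E2.
          rewrite H1 in E1, E2.
          assert (P1 : 0 <= mu (fun t => M * 1 + -1 * g t)).
          { apply Hpos. destruct bg as [N HN]. exists (Rabs M + N). intro t.
            specialize (HN t). unfold Rabs in *. repeat destruct Rcase_abs; lra.
            intro t. specialize (HM t). unfold Rabs in HM. destruct Rcase_abs; lra. }
          assert (P2 : 0 <= mu (fun t => M * 1 + 1 * g t)).
          { apply Hpos. destruct bg as [N HN]. exists (Rabs M + N). intro t.
            specialize (HN t). unfold Rabs in *. repeat destruct Rcase_abs; lra.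
            intro t. specialize (HM t). unfold Rabs in HM. destruct Rcase_abs; lra. }
          apply Rabs_le. lra. }
        assert (Pbdd : forall h, bounded_C h -> bounded_C (P h)).
        { intros h Hh. destruct Hh as [M HM]. exists (sqrt 2 * M). intro x.
          eapply Rle_trans; [apply Cmod_2Rmax|]. apply Rmult_le_compat_l; [apply sqrt_pos|].
          apply Rmax_lub; simpl; apply mub; intro t.
          - eapply Rle_trans; [|apply HM]. eapply Rle_trans; [apply Rmax_l|apply Rmax_Cmod].
          - eapply Rle_trans; [|apply HM]. eapply Rle_trans; [apply Rmax_r|apply Rmax_Cmod]. }
        assert (mum : forall F G, bounded_R F -> bounded_R G ->
          mu (fun t => F t + - G t) = mu F + - mu G).
        { intros F G bF bG. pose proof (Hlin F G 1 (-1) bF bG) as E.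
          replace (fun t => F t + - G t) with (fun t => 1 * F t + -1 * G t)
            by (apply functional_extensionality; intros; ring).
          rewrite E; ring. }
        assert (Pminus : forall f g, bounded_C f -> bounded_C g ->
          P (fun x => Cminus (f x) (g x)) = fun x => Cminus (P f x) (P g x)).
        { intros f1 g1 bf bg. apply functional_extensionality; intro x.
          unfold P, Cminus, Cplus, Copp; simpl. f_equal; apply mum; auto. }
        assert (Pkoop : forall i u h, (i < n)%nat -> i <> k -> Sj i u ->
          P (koopman act u h) = koopman act u (P h)).
        { intros i u h Hi Hik Hu. apply functional_extensionality; intro x.
          unfold P, koopman. f_equal; f_equal; apply functional_extensionality; intro t;
          rewrite (act_comm k i Hkn Hi (fun H => Hik (eq_sym H)) x (proj1_sig t) u (proj2_sig t) Hu);
          reflexivity. }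
        assert (Pinv : forall u h, Sj k u -> bounded_C h -> koopman act u (P h) = P h).
        { intros u h Hu bh. apply functional_extensionality; intro x.
          unfold P, koopman. f_equal.
          - rewrite <- (Hinvm (exist _ u Hu) (fun t => fst (h (act x (proj1_sig t))))) by auto.
            f_equal. apply functional_extensionality; intro t. unfold sub_op; simpl.
            rewrite (act_mul k Hkn x u (proj1_sig t) Hu (proj2_sig t)). reflexivity.
          - rewrite <- (Hinvm (exist _ u Hu) (fun t => snd (h (act x (proj1_sig t))))) by auto.
            f_equal. apply functional_extensionality; intro t. unfold sub_op; simpl.
            rewrite (act_mul k Hkn x u (proj1_sig t) Hu (proj2_sig t)). reflexivity. }
        assert (Pfix : forall h, (forall u, Sj k u -> koopman act u h = h) -> P h = h).
        { intros h Hh. apply functional_extensionality; intro x. unfold P.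
          assert (E : forall t : {s | Sj k s}, h (act x (proj1_sig t)) = h x).
          { intro t. exact (equal_f (Hh _ (proj2_sig t)) x). }
          replace (fun t : {s | Sj k s} => fst (h (act x (proj1_sig t)))) with (fun _ : {s | Sj k s} => fst (h x))
            by (apply functional_extensionality; intro t; rewrite E; reflexivity).
          replace (fun t : {s | Sj k s} => snd (h (act x (proj1_sig t)))) with (fun _ : {s | Sj k s} => snd (h x))
            by (apply functional_extensionality; intro t; rewrite E; reflexivity).
          rewrite !cst. destruct (h x); reflexivity. }
        set (g := fun x => Cminus (f0 x) (P f0 x)).
        assert (bg : bounded_C g) by (apply Cminus_bdd; auto).
        destruct (IH ltac:(lia) g bg) as [fs [Hfs Hinv]].
        { intros s Hs.
          set (h := diff_prod act s k f0).
          assert (hinv : forall u, Sj k u -> koopman act u h = h).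
          { intros u Hu.
            assert (E1 : koopman act u h = diff_prod act s k (koopman act u f0)).
            { unfold h. apply (diff_prod_comm act s (koopman act u) (fun _ => True)); auto.
              intros i f1 Hi _. apply functional_extensionality; intro x; unfold koopman.
              rewrite (act_comm k i Hkn ltac:(lia) ltac:(lia) x u (s i) Hu (Hs i Hi)). reflexivity. }
            rewrite E1. unfold h.
            set (s' := fun i => if Nat.eq_dec i k then u else s i).
            pose proof (H0 s') as Z.
            assert (Hs' : forall j, (j < Datatypes.S k)%nat -> Sj j (s' j)).
            { intros j Hj. unfold s'. destruct (Nat.eq_dec j k); [subst; auto|apply Hs; lia]. }
            specialize (Z Hs'). simpl in Z.
            rewrite (diff_prod_ext act s' s k) in Z.
            2:{ intros i Hi. unfold s'. destruct (Nat.eq_dec i k); [lia|reflexivity]. }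
            unfold s' in Z. destruct (Nat.eq_dec k k) as [_|]; [|congruence].
            rewrite diff_prod_minus in Z.
            apply functional_extensionality; intro x. apply Cminus_zero. exact (equal_f Z x). }
          assert (Ph : P h = h) by (apply Pfix; auto).
          unfold g. rewrite diff_prod_minus.
          rewrite <- (diff_prod_comm act s P bounded_C); auto.
          + fold h. rewrite Ph. apply functional_extensionality; intro x.
            apply C_ext; simpl; ring.
          + intros i f1 Hi bf1. apply (Pkoop i); auto; lia.
          + intros i f1 Hi [M HM]. exists M. intro x. apply HM.
          + intros; apply Cminus_bdd; auto. }
        exists (fun j => if Nat.eq_dec j k then P f0 else fs j). split.
        + simpl. rewrite (fun_sum_ext _ fs k).
          * rewrite <- Hfs. destruct (Nat.eq_dec k k); [|congruence].
            apply functional_extensionality; intro x. unfold g.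
            apply C_ext; simpl; ring.
          * intros i Hi. destruct (Nat.eq_dec i k); [lia|reflexivity].
        + intros j Hj u Hu. destruct (Nat.eq_dec j k).
          * subst. apply Pinv; auto.
          * apply Hinv; auto; lia. }
    intro H. apply (Main n (le_n n) f f_bdd H).
  -
    intros [fs [Hf Hinv]] s Hs. subst f.
    assert (Kill : forall k, (k <= n)%nat -> forall g j, (j < k)%nat ->
      (forall t, Sj j t -> koopman act t g = g) -> diff_prod act s k g = fun _ => RtoC 0).
    { induction k as [|k IH]; intros Hk g j Hj Hg; [lia|]. simpl.
      destruct (Nat.eq_dec j k) as [->|Hjk].
      - match goal with |- diff_prod _ _ _ ?F = _ => replace F with (fun _ : X => RtoC 0) end.
        + apply diff_prod_zero.
        + apply functional_extensionality; intro x.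
          rewrite (Hg (s k) (Hs k ltac:(lia))). apply C_ext; simpl; ring.
      - apply (IH ltac:(lia) _ j ltac:(lia)). intros t Ht.
        apply functional_extensionality; intro x. unfold koopman.
        rewrite (act_comm j k ltac:(lia) ltac:(lia) Hjk x t (s k) Ht (Hs k ltac:(lia))).
        pose proof (equal_f (Hg t Ht)) as E. unfold koopman in E.
        rewrite !E. reflexivity. }
    assert (Sum : forall m, (m <= n)%nat -> diff_prod act s n (fun_sum fs m) = fun _ => RtoC 0).
    { induction m as [|m IH]; intro Hm.
      - simpl. apply diff_prod_zero.
      - simpl. rewrite diff_prod_plus. rewrite IH by lia.
        rewrite (Kill n (le_n n) (fs m) m) by (try lia; apply Hinv; lia).
        apply functional_extensionality; intro x. apply C_ext; simpl; ring. }
    apply Sum; lia.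
Qed.
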